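(* Let $k$ be finite, $L\in\mathbb{R}^{k\times k}$ any nonnegative task loss matrix, $\Phi:\mathbb{R}^k\times\{1,\dots,k\}\to\mathbb{R}$ a surrogate loss that is continuous and bounded from below, and $\mathcal{F}\subseteq\mathbb{R}^k$ a subspace of scores. Then $$H_{\Phi,L,\mathcal{F}}(\varepsilon)=\min_{i,j\in\mathrm{pred}(\mathcal{F}),\,i\ne j}H_{ij}(\varepsilon),$$ where $\mathrm{pred}(\mathcal{F})=\{\mathrm{pred}(f):f\in\mathcal{F}\}$ and $$H_{ij}(\varepsilon)=\inf_{f,q}\ \delta\phi(f,q)\ \text{ s.t. } \ell_i(q)\le\ell_j(q)-\varepsilon;\ \ell_i(q)\le\ell_c(q)\ \forall c\in\mathrm{pred}(\mathcal{F});\ f_j\ge f_c\ \forall c\in\mathrm{pred}(\mathcal{F});\ f\in\mathcal{F};\ q\in\Delta_k,$$ with $\ell_c(q)=(Lq)_c$.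
   Context: $\mathrm{pred}(f)$ is the smallest index maximizing $f_c$. For $q\in\Delta_k$: $\ell(f,q)=\sum_cq_cL(\mathrm{pred}(f),c)$, $\phi(f,q)=\sum_cq_c\Phi(f,c)$, $\delta\ell(f,q)=\ell(f,q)-\inf_{\hat f\in\mathcal{F}}\ell(\hat f,q)$, $\delta\phi(f,q)=\phi(f,q)-\inf_{\hat f\in\mathcal{F}}\phi(\hat f,q)$. Calibration function: $H_{\Phi,L,\mathcal{F}}(\varepsilon)=\inf\{\delta\phi(f,q):f\in\mathcal{F},q\in\Delta_k,\delta\ell(f,q)\ge\varepsilon\}$ ($+\infty$ if empty). Infima over empty sets are $+\infty$. *)

(* Defs.v *)
From HB Require Import structures.
From mathcomp Require Import all_boot all_order all_algebra.
From mathcomp Require Import all_classical all_reals all_analysis.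

Set Implicit Arguments.
Unset Strict Implicit.
Unset Printing Implicit Defensive.

Import Order.TTheory GRing.Theory Num.Theory numFieldNormedType.Exports.
Local Open Scope ring_scope.
Local Open Scope classical_set_scope.

(* Throughout, the number of classes is k = n.+1 (k >= 1), classes are 'I_n.+1,
   score vectors are row vectors f : 'rV[R]_n.+1 with f_c = f 0 c. *)

Section Calib.
Variable R : realType.
Variable n : nat.
Local Notation k := n.+1.

Definition pred (f : 'rV[R]_k) : 'I_k :=
  [arg min_(i < ord0 | [forall j, f 0 j <= f 0 i]) (i : nat)].

Definition simplex (q : 'rV[R]_k) : Prop :=
  (forall c, 0 <= q 0 c) /\ \sum_c q 0 c = 1.

Variable L : 'M[R]_k.
Variable Phi : 'rV[R]_k -> 'I_k -> R.
Variable F : {vspace 'rV[R]_k}.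

Definition ell (f q : 'rV[R]_k) : R := \sum_c q 0 c * L (pred f) c.
Definition phi (f q : 'rV[R]_k) : R := \sum_c q 0 c * Phi f c.

Definition delta_ell (f q : 'rV[R]_k) : \bar R :=
  ((ell f q)%:E - ereal_inf [set (ell g q)%:E | g in [set g | g \in F]])%E.
Definition delta_phi (f q : 'rV[R]_k) : \bar R :=
  ((phi f q)%:E - ereal_inf [set (phi g q)%:E | g in [set g | g \in F]])%E.

Definition calib (eps : R) : \bar R :=
  ereal_inf [set z | exists (f q : 'rV[R]_k), [/\ f \in F, simplex q,
     (eps%:E <= delta_ell f q)%E & z = delta_phi f q]].

Definition predF : set 'I_k := [set pred f | f in [set f | f \in F]].

Definition ellc (c : 'I_k) (q : 'rV[R]_k) : R := \sum_j L c j * q 0 j.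

Definition Hij (i j : 'I_k) (eps : R) : \bar R :=
  ereal_inf [set z | exists (f q : 'rV[R]_k), (ellc i q <= ellc j q - eps) /\
       (forall c, predF c -> ellc i q <= ellc c q) /\
       (forall c, predF c -> f 0 c <= f 0 j) /\
       (f \in F) /\ simplex q /\ z = delta_phi f q].

(* min_{i,j in pred(F), i <> j} H_ij(eps)  (min over a finite set; +oo if empty) *)
Definition Hmin (eps : R) : \bar R :=
  ereal_inf [set z | exists i j : 'I_k, [/\ predF i, predF j, i != j & z = Hij i j eps]].

End Calib.

(* Main.v *)
Require Import Defs.
From HB Require Import structures.
From mathcomp Require Import all_boot all_order all_algebra.
From mathcomp Require Import all_classical all_reals all_analysis.
Import Order.TTheory GRing.Theory Num.Theory numFieldNormedType.Exports.
Local Open Scope ring_scope.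
Local Open Scope classical_set_scope.

Section Helpers.
Variable R : realType.
Variable n : nat.

Lemma exists_max (f : 'rV[R]_n.+1) : exists i, forall c, f 0 c <= f 0 i.
Proof.
have := @arg_maxP _ R _ (@ord0 n) xpredT (fun i => f 0 i) isT.
case=> i _ H; exists i => c; exact: H.
Qed.

Lemma pred_spec (f : 'rV[R]_n.+1) :
  (forall c, f 0 c <= f 0 (Defs.pred f)) /\
  (forall i, (forall c, f 0 c <= f 0 i) -> (Defs.pred f <= i)%N).
Proof.
rewrite /Defs.pred /arg_min /extremum.
case: pickP => [x /andP[/forallP Px /forallP Hx]|none].
  split => //= i Hi; have := Hx i; rewrite /= => /implyP; apply.
  by apply/forallP.
exfalso; have [i1 Hi1] := exists_max f.
have Pi1 : [forall j, f 0 j <= f 0 i1] by apply/forallP.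
case: (@arg_minnP _ i1 (fun i : 'I_n.+1 => [forall j, f 0 j <= f 0 i]) (fun i : 'I_n.+1 => i : nat) Pi1) => x Px Hx.
have := none x; rewrite /= Px /=; move/negbT/negP; apply.
apply/forallP => j; apply/implyP; exact: Hx.
Qed.

Lemma pred_max (f : 'rV[R]_n.+1) c : f 0 c <= f 0 (Defs.pred f).
Proof. by case: (pred_spec f). Qed.

Lemma pred_min (f : 'rV[R]_n.+1) i :
  (forall c, f 0 c <= f 0 i) -> (Defs.pred f <= i)%N.
Proof. by case: (pred_spec f) => _; apply. Qed.

Lemma pred_lt (g : 'rV[R]_n.+1) (c : 'I_n.+1) : (c < Defs.pred g)%N -> g 0 c < g 0 (Defs.pred g).
Proof.
move=> cp; rewrite lt_neqAle pred_max andbT; apply/negP => /eqP E.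
have : (Defs.pred g <= c)%N.
  by apply: pred_min => d; rewrite E; apply: pred_max.
by rewrite leqNgt cp.
Qed.

Lemma pred_char (f : 'rV[R]_n.+1) j :
  (forall c, f 0 c <= f 0 j) -> (forall c : 'I_n.+1, (c < j)%N -> f 0 c < f 0 j) ->
  Defs.pred f = j.
Proof.
move=> H1 H2; apply: val_inj; apply/eqP; rewrite eqn_leq pred_min //=.
rewrite leqNgt; apply/negP => lt.
have := H2 _ lt; have := pred_max f j.
by move=> a b; move: (lt_le_trans b a); rewrite ltxx.
Qed.

End Helpers.
Arguments pred_max {R n}.
Arguments pred_min {R n}.
Arguments pred_lt {R n}.
Arguments pred_char {R n}.

Section Helpers2.
Variable R : realType.
Variable n : nat.
Variable L : 'M[R]_n.+1.
Variable F : {vspace 'rV[R]_n.+1}.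

Lemma ell_ellc (f q : 'rV[R]_n.+1) : ell L f q = ellc L (Defs.pred f) q.
Proof. by rewrite /ell /ellc; apply: eq_bigr => c _; rewrite mulrC. Qed.

Lemma inf_ell (q : 'rV[R]_n.+1) i : predF F i ->
  (forall c, predF F c -> ellc L i q <= ellc L c q) ->
  ereal_inf [set (ell L g q)%:E | g in [set g | g \in F]] = (ellc L i q)%:E.
Proof.
move=> [g0 g0F g0i] H; apply/eqP; rewrite eq_le; apply/andP; split.
  apply: ereal_inf_lbound; exists g0 => //; by rewrite ell_ellc g0i.
apply: le_ereal_inf_tmp => z [g gF <-]; rewrite lee_fin ell_ellc; apply: H.
by exists g.
Qed.

Lemma exists_min (q : 'rV[R]_n.+1) : exists i, predF F i /\
  forall c, predF F c -> ellc L i q <= ellc L c q.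
Proof.
have P0 : `[< predF F (Defs.pred (0 : 'rV[R]_n.+1)) >].
  by apply/asboolP; exists 0 => //; rewrite /= mem0v.
have := @arg_minP _ R _ _ (fun i => `[< predF F i >]) (fun i => ellc L i q) P0.
case=> i /asboolP Pi H; exists i; split => // c Pc; apply: H.
exact/asboolP.
Qed.

End Helpers2.
Arguments ell_ellc {R n}.
Arguments inf_ell {R n L F q i}.
Arguments exists_min {R n}.

Lemma cont_phi (R : realType) (n : nat) (Phi : 'rV[R]_n.+1 -> 'I_n.+1 -> R) :
  (forall c, continuous (fun f : 'rV[R]_n.+1 => Phi f c)) ->
  forall (f g q : 'rV[R]_n.+1), simplex q -> forall e : R, 0 < e ->
  exists t : R, 0 < t /\ phi Phi (f + t *: g) q <= phi Phi f q + e.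
Proof.
move=> hPhi f g q [q0 q1] e e0.
have L1 : (fun t : R => f + t *: g) @ (0 : R) --> f.
  rewrite -[X in _ --> X]addr0; apply: cvgD; first exact: cvg_cst.
  rewrite -(scale0r g); exact: scalel_continuous.
have L2 c : (fun t : R => Phi (f + t *: g) c) @ (0 : R)^'+ --> Phi f c.
  apply: cvg_within_filter.
  exact: (cvg_comp _ _ L1 (hPhi c f)).
have L3 c : \forall t \near (0:R)^'+, `|Phi f c - Phi (f + t *: g) c| < e.
  by move: (L2 c) => /cvgrPdist_lt; apply.
have L4 : \forall t \near (0:R)^'+, forall c, `|Phi f c - Phi (f + t *: g) c| < e by apply: filter_forall.
have [t [t0 Ht]] := filter_ex (filterI (nbhs_right_gt (0:R)) L4).
exists t; split => //.
rewrite -lerBlDl /phi -sumrB.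
apply: (@le_trans _ _ (\sum_c q 0 c * e)).
  apply: ler_sum => c _; rewrite -mulrBr; apply: ler_wpM2l => //.
  apply: (le_trans (ler_norm _)); rewrite distrC; exact: ltW.
by rewrite -mulr_suml q1 mul1r.
Qed.

Theorem lemma10 (R : realType) (n : nat) (L : 'M[R]_n.+1)
    (Phi : 'rV[R]_n.+1 -> 'I_n.+1 -> R) (F : {vspace 'rV[R]_n.+1}) (eps : R) :
  (forall i j, 0 <= L i j) ->
  (forall c, continuous (fun f : 'rV[R]_n.+1 => Phi f c)) ->
  (exists m : R, forall f c, m <= Phi f c) ->
  0 < eps ->
  calib L Phi F eps = Hmin L Phi F eps.
Proof.
move=> _ hPhi _ eps0.
apply/eqP; rewrite eq_le; apply/andP; split.
- apply: le_ereal_inf_tmp => z [i [j [Pi [g gF gj] ij ->]]].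
  apply: le_ereal_inf_tmp => z' [f [q [H1 [H2 [H3 [fF [sq ->]]]]]]].
  have key t : 0 < t -> (calib L Phi F eps <= delta_phi Phi F (f + t *: g) q)%E.
    move=> t0; apply: ereal_inf_lbound; exists (f + t *: g), q; split => //.
      by rewrite memvD // memvZ.
    have pj : Defs.pred (f + t *: g) = j.
      apply: pred_char => [c|c cj]; rewrite !mxE.
        apply: lerD; last by apply: ler_wpM2l; [exact: ltW | rewrite -gj; exact: pred_max].
        apply: (le_trans (pred_max f c)); apply: H3; exists f => //.
      apply: ler_ltD; last by rewrite ltr_pM2l // -gj pred_lt // gj.
      apply: (le_trans (pred_max f c)); apply: H3; exists f => //.
    rewrite /delta_ell (inf_ell Pi) // ell_ellc pj -EFinB lee_fin.
    by rewrite lerBrDr addrC -lerBrDr.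
  rewrite /delta_phi in key *.
  set S := ereal_inf _ in key *.
  case: S key => [s| |] key.
  + apply/lee_addgt0Pr => e e0.
    have [t [t0 Ht]] := cont_phi _ _ _ hPhi f g q sq e e0.
    apply: (le_trans (key t t0)); rewrite -!EFinB -EFinD lee_fin.
    by rewrite addrAC lerD2r.
  + by have := key 1 ltr01.
  + by rewrite leey.
- apply: le_ereal_inf_tmp => z [f [q [fF sq Heps ->]]].
  have [i [Pi Hi]] := exists_min L F q.
  have Pj : predF F (Defs.pred f) by exists f.
  move: Heps; rewrite /delta_ell (inf_ell Pi Hi) ell_ellc -EFinB lee_fin => Heps.
  have ij : i != Defs.pred f.
    apply/eqP => E; move: Heps; rewrite E subrr => H.
    by move: (lt_le_trans eps0 H); rewrite ltxx.
  apply: (@le_trans _ _ (Hij L Phi F i (Defs.pred f) eps)).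
    by apply: ereal_inf_lbound; exists i, (Defs.pred f); split.
  apply: ereal_inf_lbound; exists f, q; split.
    by rewrite lerBrDr addrC -lerBrDr.
  split => //; split; first by move=> c _; apply: pred_max.
  by [].
Qed.
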